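(* Let $T$ be an MFQST with degree bound $\phi\ge3$. Then every source $z$ of $T$ has degree at most $\phi-1$. Moreover, suppose $z$ has degree exactly $\phi-1$, with in-neighbours $u_1,\dots,u_r$ and out-neighbour $y$. Let $$C=\frac{z+\sum_{i} f(u_iz)\,u_i}{1+\sum_i f(u_iz)}$$ be the centre of mass of $z$ (with mass $1$, its supply) and its in-neighbours (each weighted by the flow on its edge to $z$). Then $z=(C+y)/2$.
   Context: Let $Z=\{z_1,\dots,z_n\}\subset\mathbb{R}^2$ ($n\ge 1$) be a set of sources and $z_{BS}\in\mathbb{R}^2\setminus Z$ a sink; each source has supply $1$. A flow-dependent quadratic Steiner tree (FQST) consists of a finite set $S\subset\mathbb{R}^2$ of Steiner points and a tree $T$ with vertex set $Z\cup S\cup\{z_{BS}\}$ whose edges are directed towards $z_{BS}$. Every node other than the sink has exactly one out-edge, and the sink has none. Each edge $e$ carries a positive flow $f(e)$ such that: - at each source, the flow on its out-edge minus the total flow on its in-edges equals $1$; - at each Steiner point, the out-flow equals the total in-flow; - the sink receives total flow $n$. The cost is $L(T)=\sum_{e\in E(T)} f(e)|e|^2$. An MFQST with degree bound $\phi$ is an FQST minimising $L$ among all FQSTs (any finite $S$, any topology) in which every Steiner point has degree at least $\phi$. In-neighbours of a node are the tails of its in-edges; its out-neighbour is the head of its out-edge. *)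

(* Defs.v *)
From Stdlib Require Import Reals Lra Lia Arith List.
Open Scope R_scope.

Definition pt : Type := (R * R)%type.
Definition padd (p q : pt) : pt := (fst p + fst q, snd p + snd q).
Definition pscale (a : R) (p : pt) : pt := (a * fst p, a * snd p).
Definition sq_dist (p q : pt) : R := (fst p - fst q) ^ 2 + (snd p - snd q) ^ 2.

Definition sumR (l : list R) : R := fold_right Rplus 0 l.
Definition sumP (l : list pt) : pt := fold_right padd (0, 0) l.

(** Vertex indexing convention:
      0 .. n-1          : sources (position z i)
      n .. n+m-1        : Steiner points (position spos (v - n))
      n+m               : the sink zBS.
    Every non-sink vertex v has exactly one out-edge v -> par v, carrying
    flow [flow v]. *)
Record fqst : Type := MkFqst {
  nsteiner : nat;
  spos : nat -> pt;
  par : nat -> nat;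
  flow : nat -> R
}.

Section Defs.
Variables (n : nat) (z : nat -> pt) (zBS : pt).

Definition sink (T : fqst) : nat := (n + nsteiner T)%nat.

Definition vpos (T : fqst) (v : nat) : pt :=
  if Nat.ltb v n then z v
  else if Nat.ltb v (n + nsteiner T) then spos T (v - n)
  else zBS.

Definition in_nbrs (T : fqst) (v : nat) : list nat :=
  filter (fun u => Nat.eqb (par T u) v) (seq 0 (n + nsteiner T)).

Definition in_flow (T : fqst) (v : nat) : R := sumR (map (flow T) (in_nbrs T v)).

Definition degree (T : fqst) (v : nat) : nat :=
  (length (in_nbrs T v) + (if Nat.ltb v (n + nsteiner T) then 1 else 0))%nat.

Definition is_fqst (T : fqst) : Prop :=
  let N := (n + nsteiner T)%nat in
  (forall v, (v < N)%nat -> (par T v <= N)%nat /\ 0 < flow T v) /\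
  (forall v, (v < N)%nat -> exists k, Nat.iter k (par T) v = N) /\
  (forall a b, (a < nsteiner T)%nat -> (b < nsteiner T)%nat ->
      spos T a = spos T b -> a = b) /\
  (forall a, (a < nsteiner T)%nat -> spos T a <> zBS /\
      forall i, (i < n)%nat -> spos T a <> z i) /\
  (forall i, (i < n)%nat -> flow T i - in_flow T i = 1) /\
  (forall s, (n <= s < N)%nat -> flow T s = in_flow T s) /\
  in_flow T N = INR n.

Definition cost (T : fqst) : R :=
  sumR (map (fun v => flow T v * sq_dist (vpos T v) (vpos T (par T v)))
            (seq 0 (n + nsteiner T))).

Definition admissible (phi : nat) (T : fqst) : Prop :=
  is_fqst T /\
  forall s, (n <= s < n + nsteiner T)%nat -> (phi <= degree T s)%nat.

Definition is_MFQST (phi : nat) (T : fqst) : Prop :=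
  admissible phi T /\ forall T', admissible phi T' -> cost T <= cost T'.

Definition centre (T : fqst) (v : nat) : pt :=
  pscale (/ (1 + in_flow T v))
    (padd (vpos T v) (sumP (map (fun u => pscale (flow T u) (vpos T u)) (in_nbrs T v)))).

End Defs.

(* Main.v *)
Require Import Defs.
From Stdlib Require Import Reals Lra Lia Arith List.
Open Scope R_scope.

Definition SS (N : nat) (g : nat -> R) : R := sumR (map g (seq 0 N)).

Lemma sumR_app l1 l2 : sumR (l1 ++ l2) = sumR l1 + sumR l2.
Proof. induction l1; simpl; [lra|rewrite IHl1; lra]. Qed.

Lemma SS_0 g : SS 0 g = 0.
Proof. reflexivity. Qed.

Lemma SS_succ N g : SS (S N) g = SS N g + g N.
Proof. unfold SS. rewrite seq_S, map_app, sumR_app. simpl. lra. Qed.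

Lemma SS_ext N g h : (forall v, (v < N)%nat -> g v = h v) -> SS N g = SS N h.
Proof.
  induction N; intros H; [reflexivity|].
  rewrite !SS_succ, IHN, H; [reflexivity|lia|intros; apply H; lia].
Qed.

Lemma SS_plus N g h : SS N (fun v => g v + h v) = SS N g + SS N h.
Proof. induction N; [rewrite !SS_0; lra|rewrite !SS_succ, IHN; lra]. Qed.

Lemma SS_minus N g h : SS N (fun v => g v - h v) = SS N g - SS N h.
Proof. induction N; [rewrite !SS_0; lra|rewrite !SS_succ, IHN; lra]. Qed.

Lemma SS_scal N c g : SS N (fun v => c * g v) = c * SS N g.
Proof. induction N; [rewrite !SS_0; lra|rewrite !SS_succ, IHN; lra]. Qed.

Lemma SS_single N e c : SS N (fun v => if Nat.eqb v e then c else 0) = if Nat.ltb e N then c else 0.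
Proof.
  induction N; [reflexivity|].
  rewrite SS_succ, IHN.
  destruct (Nat.eqb_spec N e); destruct (Nat.ltb_spec e N); destruct (Nat.ltb_spec e (S N)); try lia; lra.
Qed.

Lemma sum_filter (P : nat -> bool) f l :
  sumR (map f (filter P l)) = sumR (map (fun v => if P v then f v else 0) l).
Proof. induction l; simpl; [reflexivity|]. destruct (P a); simpl; rewrite IHl; lra. Qed.

Lemma len_filter (P : nat -> bool) l :
  INR (length (filter P l)) = sumR (map (fun v => if P v then 1 else 0) l).
Proof. induction l; [reflexivity|]. cbn [filter map]. unfold sumR in *. destruct (P a); cbn [length fold_right]; rewrite <- IHl; [rewrite S_INR|]; lra. Qed.

Lemma fst_sumP (a : nat -> R) (x : nat -> pt) l :
  fst (sumP (map (fun u => pscale (a u) (x u)) l)) = sumR (map (fun u => a u * fst (x u)) l).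
Proof. induction l; simpl; [reflexivity|]. rewrite <- IHl. reflexivity. Qed.

Lemma snd_sumP (a : nat -> R) (x : nat -> pt) l :
  snd (sumP (map (fun u => pscale (a u) (x u)) l)) = sumR (map (fun u => a u * snd (x u)) l).
Proof. induction l; simpl; [reflexivity|]. rewrite <- IHl. reflexivity. Qed.

Lemma avoid_list (L : list R) (a : R) : 0 < a ->
  exists b, 0 < b <= a /\ forall x, In x L -> forall t, 0 < t < b -> t <> x.
Proof.
  induction L as [|x L IH]; intros Ha.
  - exists a; split; [lra|simpl; tauto].
  - destruct (IH Ha) as [b [Hb Hb2]].
    destruct (Rle_dec x 0).
    + exists b; split; [lra|]. intros y [Hxy|Hy] t Ht; [subst y; lra|]. apply (Hb2 y Hy t Ht).
    + exists (Rmin b x). split. { unfold Rmin; destruct (Rle_dec b x); lra. }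
      intros y [Hxy|Hy] t Ht.
      * subst y. unfold Rmin in Ht; destruct (Rle_dec b x); lra.
      * apply (Hb2 y Hy). unfold Rmin in Ht; destruct (Rle_dec b x); lra.
Qed.

Definition shiftN (N w : nat) : nat := if Nat.eqb w N then S N else w.
Definition mv (T : fqst) (i e v : nat) : bool := andb (Nat.eqb (par T v) i) (negb (Nat.eqb v e)).
Definition Tp (n : nat) (T : fqst) (i e : nat) (p : pt) : fqst :=
  MkFqst (S (nsteiner T))
    (fun a => if Nat.ltb a (nsteiner T) then spos T a else p)
    (fun v => if Nat.eqb v (n + nsteiner T) then shiftN (n + nsteiner T) (par T i)
              else if orb (Nat.eqb v i) (mv T i e v) then (n + nsteiner T)%nat
              else shiftN (n + nsteiner T) (par T v))
    (fun v => if Nat.eqb v (n + nsteiner T) then flow T i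
              else if Nat.eqb v i then 1 + (if andb (Nat.ltb e (n + nsteiner T)) (Nat.eqb (par T e) i) then flow T e else 0)
              else flow T v).

Lemma shiftN_ne N a : shiftN N a <> N.
Proof. unfold shiftN. destruct (Nat.eqb_spec a N); lia. Qed.

Lemma shiftN_lt N a : (a < N)%nat -> shiftN N a = a.
Proof. unfold shiftN. destruct (Nat.eqb_spec a N); lia. Qed.

Lemma shiftN_N N : shiftN N N = S N.
Proof. unfold shiftN. rewrite Nat.eqb_refl. reflexivity. Qed.

Lemma shiftN_inj N a b : (a <= N)%nat -> (b <= N)%nat -> Nat.eqb (shiftN N a) (shiftN N b) = Nat.eqb a b.
Proof.
  intros. unfold shiftN.
  destruct (Nat.eqb_spec a N); destruct (Nat.eqb_spec b N);
  destruct (Nat.eqb_spec a b);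
  try reflexivity; try (apply Nat.eqb_eq; lia); apply Nat.eqb_neq; lia.
Qed.

Lemma iter_fix (f : nat -> nat) v k : f v = v -> Nat.iter k f v = v.
Proof. intros H. induction k; simpl; [reflexivity|]. rewrite IHk; exact H. Qed.

Lemma par_ne_self n z zBS T v : is_fqst n z zBS T -> (v < n + nsteiner T)%nat -> par T v <> v.
Proof.
  intros [_ [Hr _]] Hv Hp. destruct (Hr v Hv) as [k Hk].
  rewrite iter_fix in Hk by exact Hp. lia.
Qed.


Lemma Tp_ns n T i e p : (n + nsteiner (Tp n T i e p) = S (n + nsteiner T))%nat.
Proof. simpl. lia. Qed.

Lemma Tp_parE n T i e p v : par (Tp n T i e p) v =
  if Nat.eqb v (n + nsteiner T) then shiftN (n + nsteiner T) (par T i)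
  else if orb (Nat.eqb v i) (mv T i e v) then (n + nsteiner T)%nat
  else shiftN (n + nsteiner T) (par T v).
Proof. reflexivity. Qed.

Lemma Tp_flowE n T i e p v : flow (Tp n T i e p) v =
  if Nat.eqb v (n + nsteiner T) then flow T i
  else if Nat.eqb v i then 1 + (if andb (Nat.ltb e (n + nsteiner T)) (Nat.eqb (par T e) i) then flow T e else 0)
  else flow T v.
Proof. reflexivity. Qed.

Lemma Tp_vpos_lt n z zBS T i e p v : (v < n + nsteiner T)%nat ->
  vpos n z zBS (Tp n T i e p) v = vpos n z zBS T v.
Proof.
  intros Hv. unfold vpos. rewrite Tp_ns. cbn [spos Tp].
  destruct (Nat.ltb_spec v n); [reflexivity|].
  destruct (Nat.ltb_spec v (n + nsteiner T)); [|lia].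
  destruct (Nat.ltb_spec v (S (n + nsteiner T))); [|lia].
  destruct (Nat.ltb_spec (v - n) (nsteiner T)); [reflexivity|lia].
Qed.

Lemma Tp_vpos_N n z zBS T i e p : (1 <= n)%nat ->
  vpos n z zBS (Tp n T i e p) (n + nsteiner T) = p.
Proof.
  intros Hn. unfold vpos. rewrite Tp_ns. cbn [spos Tp].
  destruct (Nat.ltb_spec (n + nsteiner T) n); [lia|].
  destruct (Nat.ltb_spec (n + nsteiner T) (S (n + nsteiner T))); [|lia].
  destruct (Nat.ltb_spec (n + nsteiner T - n) (nsteiner T)); [lia|reflexivity].
Qed.

Lemma Tp_vpos_shift n z zBS T i e p w : (w <= n + nsteiner T)%nat ->
  vpos n z zBS (Tp n T i e p) (shiftN (n + nsteiner T) w) = vpos n z zBS T w.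
Proof.
  intros Hw. destruct (Nat.eq_dec w (n + nsteiner T)) as [->|Hne].
  - rewrite shiftN_N. unfold vpos. rewrite Tp_ns.
    destruct (Nat.ltb_spec (S (n + nsteiner T)) n); [lia|].
    destruct (Nat.ltb_spec (S (n + nsteiner T)) (S (n + nsteiner T))); [lia|].
    destruct (Nat.ltb_spec (n + nsteiner T) n); [lia|].
    destruct (Nat.ltb_spec (n + nsteiner T) (n + nsteiner T)); [lia|reflexivity].
  - rewrite shiftN_lt by lia. apply Tp_vpos_lt. lia.
Qed.

Lemma eqb_f a b : a <> b -> Nat.eqb a b = false.
Proof. apply Nat.eqb_neq. Qed.

Lemma inw_shift n T i e p (a a' : nat -> R) w :
  (forall u, (u < n + nsteiner T)%nat -> (par T u <= n + nsteiner T)%nat) ->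
  (i < n + nsteiner T)%nat -> (w <= n + nsteiner T)%nat -> w <> i ->
  (forall u, (u < n + nsteiner T)%nat -> u <> i -> a' u = a u) ->
  a' (n + nsteiner T)%nat = a i ->
  SS (S (n + nsteiner T)) (fun u => if Nat.eqb (par (Tp n T i e p) u) (shiftN (n + nsteiner T) w) then a' u else 0)
  = SS (n + nsteiner T) (fun u => if Nat.eqb (par T u) w then a u else 0).
Proof.
  intros Hpar Hi Hw Hwi Ha HaN.
  set (N := (n + nsteiner T)%nat) in *.
  rewrite SS_succ.
  rewrite (SS_ext _ _ (fun u => (if Nat.eqb (par T u) w then a u else 0) -
       (if Nat.eqb u i then (if Nat.eqb (par T i) w then a i else 0) else 0))).
  2:{ intros u Hu. rewrite Tp_parE. fold N. rewrite (eqb_f u N) by lia.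
      destruct (Nat.eqb_spec u i).
      - subst u. simpl. rewrite (eqb_f N (shiftN N w)) by (apply not_eq_sym, shiftN_ne). lra.
      - simpl. destruct (mv T i e u) eqn:Hm.
        + unfold mv in Hm. apply andb_prop in Hm. destruct Hm as [Hm _].
          apply Nat.eqb_eq in Hm. rewrite Hm.
          rewrite (eqb_f N (shiftN N w)) by (apply not_eq_sym, shiftN_ne).
          rewrite (eqb_f i w) by lia. lra.
        + rewrite shiftN_inj by (try apply Hpar; lia). rewrite Ha by lia. lra. }
  rewrite SS_minus, SS_single.
  destruct (Nat.ltb_spec i N); [|lia].
  rewrite Tp_parE. fold N. rewrite Nat.eqb_refl.
  rewrite shiftN_inj by (try apply Hpar; lia). rewrite HaN.
  lra.
Qed.

Lemma Tp_reach n T i e p :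
  (forall u, (u < n + nsteiner T)%nat -> (par T u <= n + nsteiner T)%nat) ->
  (forall v, (v < n + nsteiner T)%nat -> exists k, Nat.iter k (par T) v = (n + nsteiner T)%nat) ->
  (i < n + nsteiner T)%nat ->
  forall v, (v < S (n + nsteiner T))%nat ->
    exists k, Nat.iter k (par (Tp n T i e p)) v = S (n + nsteiner T).
Proof.
  intros Hpar Hr Hi.
  set (N := (n + nsteiner T)%nat) in *.
  set (P' := par (Tp n T i e p)).
  set (R' := fun x => exists k, Nat.iter k P' x = S N).
  assert (step : forall x, R' (P' x) -> R' x).
  { intros x [k Hk]. exists (S k). rewrite Nat.iter_succ_r. exact Hk. }
  assert (back : forall x, R' x -> x <> S N -> R' (P' x)).
  { intros x [k Hk] Hx. destruct k. { simpl in Hk. congruence. }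
    rewrite Nat.iter_succ_r in Hk. exists k. exact Hk. }
  assert (PN : P' N = shiftN N (par T i)).
  { unfold P'. rewrite Tp_parE. fold N. rewrite Nat.eqb_refl. reflexivity. }
  assert (Pi : P' i = N).
  { unfold P'. rewrite Tp_parE. fold N. rewrite (eqb_f i N) by lia. rewrite Nat.eqb_refl. reflexivity. }
  assert (RSN : R' (S N)). { exists 0%nat. reflexivity. }
  assert (RN : R' i -> R' N).
  { intros H. rewrite <- Pi. apply back; [exact H|lia]. }
  assert (main : forall k v, (v < N)%nat -> Nat.iter k (par T) v = N -> R' v).
  { induction k as [|k IH]; intros v Hv Hk. { simpl in Hk. lia. }
    rewrite Nat.iter_succ_r in Hk.
    assert (Hpv := Hpar v Hv). fold N in Hpv.
    assert (PNok : (par T i < N)%nat -> Nat.iter k (par T) (par T i) = N -> R' N).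
    { intros H1 H2. apply step. rewrite PN. rewrite shiftN_lt by exact H1. apply IH; assumption. }
    destruct (Nat.eqb_spec v i) as [Hvi|Hvi].
    - subst v. apply step. rewrite Pi.
      destruct (Nat.eq_dec (par T i) N) as [He|He].
      + apply step. rewrite PN, He, shiftN_N. exact RSN.
      + apply PNok; [lia|exact Hk].
    - destruct (mv T i e v) eqn:Hm.
      + apply step. unfold P'. rewrite Tp_parE. fold N. rewrite (eqb_f v N) by lia.
        rewrite (eqb_f v i) by exact Hvi. rewrite Hm. simpl.
        apply RN. unfold mv in Hm. apply andb_prop in Hm. destruct Hm as [Hm _].
        apply Nat.eqb_eq in Hm. rewrite Hm in Hk. apply IH; assumption.
      + apply step. unfold P'. rewrite Tp_parE. fold N. rewrite (eqb_f v N) by lia.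
        rewrite (eqb_f v i) by exact Hvi. rewrite Hm. simpl.
        destruct (Nat.eq_dec (par T v) N) as [He|He].
        * rewrite He, shiftN_N. exact RSN.
        * rewrite shiftN_lt by lia. apply IH; [lia|exact Hk]. }
  intros v Hv.
  assert (Ri : R' i). { destruct (Hr i Hi) as [k Hk]. apply (main k); assumption. }
  destruct (Nat.eq_dec v N) as [->|Hne].
  - apply RN, Ri.
  - destruct (Hr v ltac:(lia)) as [k Hk]. apply (main k); [lia|exact Hk].
Qed.

Lemma inflow_SS n T x : in_flow n T x = SS (n + nsteiner T) (fun u => if Nat.eqb (par T u) x then flow T u else 0).
Proof. unfold in_flow, in_nbrs. rewrite sum_filter. reflexivity. Qed.

Lemma len_SS n T x : INR (length (in_nbrs n T x)) = SS (n + nsteiner T) (fun u => if Nat.eqb (par T u) x then 1 else 0).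
Proof. unfold in_nbrs. rewrite len_filter. reflexivity. Qed.

Lemma mv_i T i e : par T i <> i -> mv T i e i = false.
Proof. intros H. unfold mv. rewrite (eqb_f _ _ H). reflexivity. Qed.

Lemma mv_par T i e u : mv T i e u = true -> par T u = i.
Proof. unfold mv. intros Hm. apply andb_prop in Hm. destruct Hm as [Hm _]. apply Nat.eqb_eq, Hm. Qed.

Lemma shiftN_le N w : (w <= N)%nat -> (shiftN N w <= S N)%nat.
Proof. unfold shiftN. destruct (Nat.eqb_spec w N); lia. Qed.

Lemma inN n T i e p (a' : nat -> R) :
  (i < n + nsteiner T)%nat -> par T i <> i ->
  SS (S (n + nsteiner T)) (fun u => if Nat.eqb (par (Tp n T i e p) u) (n + nsteiner T) then a' u else 0)
  = SS (n + nsteiner T) (fun u => if mv T i e u then a' u else 0) + a' i.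
Proof.
  intros Hi Hpi. set (N := (n + nsteiner T)%nat) in *.
  rewrite SS_succ. rewrite Tp_parE. fold N. rewrite Nat.eqb_refl.
  rewrite (eqb_f (shiftN N (par T i)) N) by apply shiftN_ne.
  rewrite (SS_ext _ _ (fun u => (if mv T i e u then a' u else 0) + (if Nat.eqb u i then a' i else 0))).
  2:{ intros u Hu. rewrite Tp_parE. fold N. rewrite (eqb_f u N) by lia.
      destruct (Nat.eqb_spec u i).
      - subst u. rewrite mv_i by exact Hpi. simpl. rewrite Nat.eqb_refl. lra.
      - simpl. destruct (mv T i e u); simpl; [rewrite Nat.eqb_refl; lra|].
        rewrite (eqb_f _ N) by apply shiftN_ne. lra. }
  rewrite SS_plus, SS_single. destruct (Nat.ltb_spec i N); [lra|lia].
Qed.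

Lemma Tp_admissible n z zBS phi T i e p :
  (1 <= n)%nat -> (i < n)%nat -> admissible n z zBS phi T ->
  (forall a, (a < nsteiner T)%nat -> spos T a <> p) -> p <> zBS -> (forall j, (j < n)%nat -> p <> z j) ->
  INR phi <= 2 + SS (n + nsteiner T) (fun u => if mv T i e u then 1 else 0) ->
  admissible n z zBS phi (Tp n T i e p).
Proof.
  intros Hn Hin [Hf Hdeg] Hp1 Hp2 Hp3 Hphi.
  assert (Hpi : par T i <> i) by (apply (par_ne_self n z zBS T); [exact Hf|lia]).
  unfold is_fqst in Hf. cbv zeta in Hf.
  destruct Hf as [Hpf [Hr [Hinj [Hav [Hsrc [Hst Hsink]]]]]].
  set (N := (n + nsteiner T)%nat) in *.
  assert (Hpar : forall u, (u < N)%nat -> (par T u <= N)%nat) by (intros u Hu; apply Hpf, Hu).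
  assert (HiN : (i < N)%nat) by lia.
  assert (Hfl : forall u, (u < N)%nat -> u <> i -> flow (Tp n T i e p) u = flow T u).
  { intros u Hu Hui. rewrite Tp_flowE. fold N. rewrite (eqb_f u N) by lia. rewrite (eqb_f u i) by exact Hui. reflexivity. }
  assert (HflN : flow (Tp n T i e p) N = flow T i).
  { rewrite Tp_flowE. fold N. rewrite Nat.eqb_refl. reflexivity. }
  assert (HE : forall u, (u < N)%nat ->
     (if Nat.eqb (par T u) i then flow T u else 0) =
     (if mv T i e u then flow T u else 0) +
     (if Nat.eqb u e then (if Nat.eqb (par T e) i then flow T e else 0) else 0)).
  { intros u Hu. unfold mv. destruct (Nat.eqb_spec (par T u) i); destruct (Nat.eqb_spec u e); subst; simpl;
    try rewrite Nat.eqb_refl; try lra. rewrite (eqb_f _ _ n0). lra. }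
  split.
  - unfold is_fqst. cbv zeta. rewrite Tp_ns. fold N.
    split; [|split; [|split; [|split; [|split; [|split]]]]].
    + intros v Hv. split.
      * rewrite Tp_parE. fold N. destruct (Nat.eqb_spec v N).
        -- apply shiftN_le, Hpar, HiN.
        -- destruct (orb _ _); [lia|]. apply shiftN_le, Hpar. lia.
      * rewrite Tp_flowE. fold N. destruct (Nat.eqb_spec v N); [apply Hpf; exact HiN|].
        destruct (Nat.eqb_spec v i).
        -- destruct (andb _ _) eqn:Ha; [|lra].
           apply andb_prop in Ha. destruct Ha as [Ha _]. apply Nat.ltb_lt in Ha.
           assert (0 < flow T e) by (apply Hpf, Ha). lra.
        -- apply Hpf. lia.
    + apply Tp_reach; assumption.
    + intros a b Ha Hb. cbn [spos Tp nsteiner] in *.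
      destruct (Nat.ltb_spec a (nsteiner T)); destruct (Nat.ltb_spec b (nsteiner T)).
      * apply Hinj; assumption.
      * intros Hq. exfalso. apply (Hp1 a); assumption.
      * intros Hq. exfalso. apply (Hp1 b); [assumption|auto].
      * lia.
    + intros a Ha. cbn [spos Tp nsteiner] in *.
      destruct (Nat.ltb_spec a (nsteiner T)).
      * apply Hav. assumption.
      * split; [exact Hp2|]. intros j Hj. apply Hp3, Hj.
    + intros j Hj. rewrite inflow_SS, Tp_ns. fold N.
      destruct (Nat.eq_dec j i) as [->|Hji].
      * rewrite SS_succ.
        assert (Hl : (if Nat.eqb (par (Tp n T i e p) N) i then flow (Tp n T i e p) N else 0) = 0).
        { rewrite Tp_parE. fold N. rewrite Nat.eqb_refl.
          rewrite <- (shiftN_lt N i HiN) at 2.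
          rewrite shiftN_inj by (try apply Hpar; lia). rewrite (eqb_f _ _ Hpi). reflexivity. }
        rewrite Hl.
        rewrite (SS_ext _ _ (fun u => if Nat.eqb u e then (if Nat.eqb (par T e) i then flow T e else 0) else 0)).
        2:{ intros u Hu. rewrite Tp_parE. fold N. rewrite (eqb_f u N) by lia.
            destruct (Nat.eqb_spec u i) as [Hui|Hui].
            - rewrite Hui. cbn [orb]. rewrite (eqb_f N i) by lia.
              destruct (Nat.eqb_spec i e) as [Hie|]; [rewrite <- Hie, (eqb_f _ _ Hpi)|]; reflexivity.
            - rewrite (Hfl u Hu Hui). cbn [orb]. destruct (mv T i e u) eqn:Hm.
              + rewrite (eqb_f N i) by lia. destruct (Nat.eqb_spec u e) as [Hue|]; [|reflexivity].
                rewrite Hue in Hm. unfold mv in Hm. rewrite Nat.eqb_refl in Hm.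
                rewrite Bool.andb_false_r in Hm. discriminate.
              + assert (Hsh : Nat.eqb (shiftN N (par T u)) (shiftN N i) = Nat.eqb (par T u) i)
                  by (apply shiftN_inj; [apply Hpar; exact Hu|lia]).
                rewrite (shiftN_lt N i HiN) in Hsh. rewrite Hsh.
                destruct (Nat.eqb_spec (par T u) i) as [Hpu|Hpu].
                * assert (Hue : u = e).
                  { unfold mv in Hm. rewrite (proj2 (Nat.eqb_eq _ _) Hpu) in Hm.
                    destruct (Nat.eqb_spec u e); [auto|discriminate]. }
                  rewrite <- Hue, Nat.eqb_refl, (proj2 (Nat.eqb_eq _ _) Hpu). reflexivity.
                * destruct (Nat.eqb_spec u e) as [Hue|]; [rewrite <- Hue, (eqb_f _ _ Hpu)|]; reflexivity. }
        rewrite SS_single. rewrite Tp_flowE. fold N. rewrite (eqb_f i N) by lia. rewrite Nat.eqb_refl.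
        destruct (Nat.ltb e N); simpl; lra.
      * rewrite <- (shiftN_lt N j) by lia.
        rewrite (inw_shift n T i e p (flow T)) by (try assumption; lia).
        rewrite shiftN_lt by lia. rewrite Hfl by lia. rewrite <- inflow_SS. apply Hsrc, Hj.
    + intros s Hs. rewrite inflow_SS, Tp_ns. fold N.
      destruct (Nat.eq_dec s N) as [->|Hsn].
      * unfold N. rewrite inN by assumption. fold N. rewrite HflN.
        rewrite (SS_ext _ (fun u => if mv T i e u then flow (Tp n T i e p) u else 0) (fun u => if mv T i e u then flow T u else 0)).
        2:{ intros u Hu. destruct (mv T i e u) eqn:Hm; [|reflexivity].
            rewrite Hfl; [reflexivity|exact Hu|]. intros ->. rewrite mv_i in Hm by exact Hpi. discriminate. }
        assert (Hs1 := Hsrc i Hin). rewrite inflow_SS in Hs1. fold N in Hs1.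
        rewrite (SS_ext _ _ _ HE), SS_plus, SS_single in Hs1.
        rewrite Tp_flowE. fold N. rewrite (eqb_f i N) by lia. rewrite Nat.eqb_refl.
        destruct (Nat.ltb e N); simpl in *; lra.
      * rewrite <- (shiftN_lt N s) by lia.
        rewrite (inw_shift n T i e p (flow T)) by (try assumption; lia).
        rewrite shiftN_lt by lia. rewrite Hfl by lia. rewrite <- inflow_SS. apply Hst. lia.
    + rewrite inflow_SS, Tp_ns. fold N.
      assert (Hx := inw_shift n T i e p (flow T) (flow (Tp n T i e p)) N Hpar HiN ltac:(lia) ltac:(lia) Hfl HflN).
      rewrite shiftN_N in Hx. fold N in Hx. rewrite Hx.
      unfold N; rewrite <- inflow_SS. exact Hsink.
  - intros s Hs. rewrite Tp_ns in Hs. fold N in Hs.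
    unfold degree. rewrite Tp_ns. fold N.
    destruct (Nat.ltb_spec s (S N)); [|lia].
    destruct (Nat.eq_dec s N) as [->|Hsn].
    + assert (H1 := len_SS n (Tp n T i e p) N). rewrite Tp_ns in H1. fold N in H1.
      unfold N in H1. rewrite inN in H1 by assumption. fold N in H1.
      apply INR_le. rewrite plus_INR, H1. simpl. lra.
    + assert (H1 := len_SS n (Tp n T i e p) s). rewrite Tp_ns in H1. fold N in H1.
      assert (Hx := inw_shift n T i e p (fun _ => 1) (fun _ => 1) s Hpar HiN ltac:(lia) ltac:(lia) (fun _ _ _ => eq_refl) eq_refl).
      rewrite shiftN_lt in Hx by lia. fold N in Hx. rewrite Hx in H1.
      unfold N in H1; rewrite <- len_SS in H1. apply INR_eq in H1.
      assert (H2 := Hdeg s ltac:(lia)). unfold degree in H2.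
      rewrite H1. fold N in H2. destruct (Nat.ltb_spec s N); lia.
Qed.

Lemma cost_SS n z zBS T : cost n z zBS T =
  SS (n + nsteiner T) (fun v => flow T v * sq_dist (vpos n z zBS T v) (vpos n z zBS T (par T v))).
Proof. reflexivity. Qed.

Lemma vpos_src n z zBS T i : (i < n)%nat -> vpos n z zBS T i = z i.
Proof. intros H. unfold vpos. destruct (Nat.ltb_spec i n); [reflexivity|lia]. Qed.

Lemma Tp_cost n z zBS T i e p :
  (1 <= n)%nat -> (i < n)%nat -> is_fqst n z zBS T ->
  cost n z zBS (Tp n T i e p) = cost n z zBS T
   + SS (n + nsteiner T) (fun u => if mv T i e u then flow T u * (sq_dist (vpos n z zBS T u) p - sq_dist (vpos n z zBS T u) (z i)) else 0)
   + (flow (Tp n T i e p) i * sq_dist (z i) p - flow T i * sq_dist (z i) (vpos n z zBS T (par T i)))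
   + flow T i * sq_dist p (vpos n z zBS T (par T i)).
Proof.
  intros Hn Hin Hf.
  assert (Hpi : par T i <> i) by (apply (par_ne_self n z zBS T); [exact Hf|lia]).
  destruct Hf as [Hpf _].
  set (N := (n + nsteiner T)%nat) in *.
  assert (Hpar : forall u, (u < N)%nat -> (par T u <= N)%nat) by (intros u Hu; apply Hpf, Hu).
  assert (HiN : (i < N)%nat) by lia.
  rewrite !cost_SS, Tp_ns. fold N. rewrite SS_succ.
  assert (Hlast : flow (Tp n T i e p) N * sq_dist (vpos n z zBS (Tp n T i e p) N)
           (vpos n z zBS (Tp n T i e p) (par (Tp n T i e p) N)) =
           flow T i * sq_dist p (vpos n z zBS T (par T i))).
  { rewrite Tp_flowE, Tp_parE. fold N. rewrite Nat.eqb_refl.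
    unfold N. rewrite Tp_vpos_N by exact Hn. rewrite Tp_vpos_shift by (apply Hpar; exact HiN). reflexivity. }
  rewrite Hlast.
  rewrite (SS_ext _ _ (fun u => (flow T u * sq_dist (vpos n z zBS T u) (vpos n z zBS T (par T u))
     + (if mv T i e u then flow T u * (sq_dist (vpos n z zBS T u) p - sq_dist (vpos n z zBS T u) (z i)) else 0))
     + (if Nat.eqb u i then (flow (Tp n T i e p) i * sq_dist (z i) p - flow T i * sq_dist (z i) (vpos n z zBS T (par T i))) else 0))).
  2:{ intros u Hu. rewrite Tp_parE. fold N. rewrite (eqb_f u N) by lia.
      rewrite (Tp_vpos_lt n z zBS T i e p u) by exact Hu.
      destruct (Nat.eqb_spec u i) as [Hui|Hui].
      - rewrite Hui. cbn [orb]. rewrite mv_i by exact Hpi.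
        unfold N. rewrite Tp_vpos_N by exact Hn. rewrite vpos_src by exact Hin. lra.
      - cbn [orb]. rewrite (Tp_flowE n T i e p u). fold N. rewrite (eqb_f u N) by lia. rewrite (eqb_f u i Hui).
        destruct (mv T i e u) eqn:Hm.
        + unfold N. rewrite Tp_vpos_N by exact Hn. rewrite (mv_par _ _ _ _ Hm). rewrite (vpos_src n z zBS T i Hin). lra.
        + unfold N. rewrite Tp_vpos_shift by (apply Hpar; exact Hu). lra. }
  rewrite !SS_plus, SS_single. destruct (Nat.ltb_spec i N); [|lia]. lra.
Qed.

Definition Gc n z zBS T i e (pr : pt -> R) : R :=
  SS (n + nsteiner T) (fun u => if mv T i e u then flow T u * (pr (z i) - pr (vpos n z zBS T u)) else 0)
  + flow T i * (pr (z i) - pr (vpos n z zBS T (par T i))).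

Lemma G_zero n z zBS phi T i e :
  (1 <= n)%nat -> (i < n)%nat -> is_MFQST n z zBS phi T ->
  INR phi <= 2 + SS (n + nsteiner T) (fun u => if mv T i e u then 1 else 0) ->
  Gc n z zBS T i e fst = 0 /\ Gc n z zBS T i e snd = 0.
Proof.
  intros Hn Hin [Hadm Hopt] Hphi.
  set (G1 := Gc n z zBS T i e fst). set (G2 := Gc n z zBS T i e snd).
  assert (Hgf : ~ (0 < G1 * G1 + G2 * G2)).
  2:{ assert (0 <= G1 * G1) by nra. assert (0 <= G2 * G2) by nra. split; nra. }
  intros Hg.
  set (g := G1 * G1 + G2 * G2) in *.
  assert (HF : 0 < flow T i) by (destruct Hadm as [[Hpf _] _]; apply Hpf; lia).
  set (z1 := fst (z i)); set (z2 := snd (z i)).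
  set (tau := fun q : pt => ((z1 - fst q) * G1 + (z2 - snd q) * G2) / g).
  set (Q := map z (seq 0 n) ++ map (spos T) (seq 0 (nsteiner T)) ++ zBS :: nil).
  destruct (avoid_list (map tau Q) (/ flow T i) ltac:(apply Rinv_0_lt_compat; exact HF)) as [b [Hb Hb2]].
  set (t := b / 2).
  assert (Ht : 0 < t < b) by (unfold t; lra).
  set (p := (z1 - t * G1, z2 - t * G2)).
  assert (Hav : forall q, In q Q -> q <> p).
  { intros q Hq Heq; apply (Hb2 (tau q) (in_map tau Q q Hq) t Ht).
    unfold tau; rewrite Heq; unfold p; simpl. unfold g in *. field. lra. }
  assert (Hadm' : admissible n z zBS phi (Tp n T i e p)).
  { apply Tp_admissible; try assumption.
    - intros a Ha Heq; apply (Hav (spos T a)); [|exact Heq].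
      unfold Q; apply in_or_app; right; apply in_or_app; left. apply in_map, in_seq; lia.
    - intros Heq; apply (Hav zBS); [|auto].
      unfold Q; apply in_or_app; right; apply in_or_app; right; left; reflexivity.
    - intros j Hj Heq; apply (Hav (z j)); [|auto].
      unfold Q; apply in_or_app; left; apply in_map, in_seq; lia. }
  assert (Hc := Hopt _ Hadm').
  destruct Hadm as [Hf Hdeg].
  rewrite (Tp_cost n z zBS T i e p Hn Hin Hf) in Hc.
  assert (Hpi : par T i <> i) by (apply (par_ne_self n z zBS T); [exact Hf|lia]).
  assert (Hcons : flow T i = SS (n + nsteiner T) (fun u => if mv T i e u then flow T u else 0) + flow (Tp n T i e p) i).
  { destruct Hadm' as [Hf' _]. unfold is_fqst in Hf'. cbv zeta in Hf'.
    destruct Hf' as [_ [_ [_ [_ [_ [Hst' _]]]]]].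
    assert (H := Hst' (n + nsteiner T)%nat ltac:(rewrite Tp_ns; lia)).
    rewrite inflow_SS, Tp_ns, inN in H by (try exact Hpi; lia).
    rewrite Tp_flowE, Nat.eqb_refl in H. rewrite H. f_equal.
    apply SS_ext. intros u Hu. destruct (mv T i e u) eqn:Hm; [|reflexivity].
    rewrite Tp_flowE. rewrite (eqb_f u _) by lia.
    rewrite (eqb_f u i); [reflexivity|]. intros ->. rewrite mv_i in Hm by exact Hpi. discriminate. }
  set (fi := flow (Tp n T i e p) i) in *.
  set (y := vpos n z zBS T (par T i)) in *.
  set (M := SS (n + nsteiner T) (fun u => if mv T i e u then flow T u else 0)) in *.
  set (A1 := SS (n + nsteiner T) (fun u => if mv T i e u then flow T u * (fst (z i) - fst (vpos n z zBS T u)) else 0)).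
  set (A2 := SS (n + nsteiner T) (fun u => if mv T i e u then flow T u * (snd (z i) - snd (vpos n z zBS T u)) else 0)).
  assert (HG1 : G1 = A1 + flow T i * (fst (z i) - fst y)) by reflexivity.
  assert (HG2 : G2 = A2 + flow T i * (snd (z i) - snd y)) by reflexivity.
  rewrite (SS_ext _ _ (fun u => (-2 * t * G1) * (if mv T i e u then flow T u * (fst (z i) - fst (vpos n z zBS T u)) else 0)
      + ((-2 * t * G2) * (if mv T i e u then flow T u * (snd (z i) - snd (vpos n z zBS T u)) else 0)
      + (t * t * g) * (if mv T i e u then flow T u else 0)))) in Hc.
  2:{ intros u Hu. destruct (mv T i e u); [|ring]. unfold sq_dist, p, g, z1, z2. simpl. ring. }
  rewrite !SS_plus, !SS_scal in Hc. fold A1 A2 M in Hc.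
  assert (Hft : flow T i * t < 1).
  { assert (flow T i * t < flow T i * / flow T i) by (apply Rmult_lt_compat_l; lra).
    rewrite Rinv_r in H by lra. exact H. }
  assert (Hd : -2 * t * G1 * A1 + (-2 * t * G2 * A2 + t * t * g * M) + (fi * sq_dist (z i) p - flow T i * sq_dist (z i) y) + flow T i * sq_dist p y
               = 2 * t * g * (flow T i * t - 1)).
  { unfold sq_dist, p, g, z1, z2. simpl. rewrite HG1, HG2.
    replace fi with (flow T i - M) by lra. ring. }
  assert (2 * t * g * (flow T i * t - 1) < 0).
  { assert (0 < 2 * t * g) by (apply Rmult_lt_0_compat; lra). nra. }
  lra.
Qed.

Lemma mvN_SS n T i (a : nat -> R) :
  SS (n + nsteiner T) (fun u => if mv T i (n + nsteiner T) u then a u else 0)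
  = SS (n + nsteiner T) (fun u => if Nat.eqb (par T u) i then a u else 0).
Proof.
  apply SS_ext. intros u Hu. unfold mv. rewrite (eqb_f u _) by lia. simpl.
  rewrite Bool.andb_true_r. reflexivity.
Qed.

Lemma mv_diff n T i e (a : nat -> R) : par T e = i ->
  SS (n + nsteiner T) (fun u => if mv T i (n + nsteiner T) u then a u else 0)
  - SS (n + nsteiner T) (fun u => if mv T i e u then a u else 0)
  = if Nat.ltb e (n + nsteiner T) then a e else 0.
Proof.
  intros He. rewrite <- SS_minus, <- SS_single. apply SS_ext. intros u Hu.
  unfold mv. rewrite (eqb_f u (n + nsteiner T)) by lia. simpl. rewrite Bool.andb_true_r.
  destruct (Nat.eqb_spec u e) as [Hue|Hue].
  - rewrite Hue, He, Nat.eqb_refl. simpl. lra.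
  - simpl. rewrite Bool.andb_true_r. destruct (par T u =? i); lra.
Qed.

Theorem mainTheorem9 (n : nat) (z : nat -> pt) (zBS : pt) (phi : nat) (T : fqst) :
  (1 <= n)%nat ->
  (forall i j, (i < n)%nat -> (j < n)%nat -> z i = z j -> i = j) ->
  (forall i, (i < n)%nat -> z i <> zBS) ->
  (3 <= phi)%nat ->
  is_MFQST n z zBS phi T ->
  forall i, (i < n)%nat ->
    (degree n T i <= phi - 1)%nat /\
    (degree n T i = (phi - 1)%nat ->
       vpos n z zBS T i =
       pscale (/ 2) (padd (centre n z zBS T i) (vpos n z zBS T (par T i)))).
Proof.
  intros Hn Hzinj HzBS Hphi HM i Hi.
  assert (HM' := HM). destruct HM' as [[Hf Hdeg] Hopt].
  assert (Hpi : par T i <> i) by (apply (par_ne_self n z zBS T); [exact Hf|lia]).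
  assert (Hf' := Hf). unfold is_fqst in Hf'. cbv zeta in Hf'.
  destruct Hf' as [Hpf [Hr [Hinj [Hav [Hsrc [Hst Hsink]]]]]].
  set (N := (n + nsteiner T)%nat) in *.
  assert (HiN : (i < N)%nat) by lia.
  assert (Hdegi : degree n T i = (length (in_nbrs n T i) + 1)%nat).
  { unfold degree. fold N. destruct (Nat.ltb_spec i N); [reflexivity|lia]. }
  set (r := length (in_nbrs n T i)) in *.
  assert (Hr1 : INR r = SS N (fun u => if Nat.eqb (par T u) i then 1 else 0)) by (apply len_SS).
  assert (GA : (phi <= r + 2)%nat -> Gc n z zBS T i N fst = 0 /\ Gc n z zBS T i N snd = 0).
  { intros Hle. apply G_zero with phi; try assumption.
    fold N. unfold N. rewrite mvN_SS. fold N. rewrite <- Hr1.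
    apply le_INR in Hle. rewrite plus_INR in Hle. simpl in Hle. lra. }
  split.
  - rewrite Hdegi. destruct (Nat.le_gt_cases (r + 1) (phi - 1)) as [Hle|Hgt]; [exact Hle|exfalso].
    destruct (in_nbrs n T i) as [|e l] eqn:Hnb.
    { unfold r in Hgt. simpl in Hgt. lia. }
    assert (Hein : In e (in_nbrs n T i)) by (rewrite Hnb; left; reflexivity).
    unfold in_nbrs in Hein. apply filter_In in Hein. destruct Hein as [HeN Hpe].
    apply in_seq in HeN. apply Nat.eqb_eq in Hpe.
    assert (GB : Gc n z zBS T i e fst = 0 /\ Gc n z zBS T i e snd = 0).
    { apply G_zero with phi; try assumption.
      assert (Hx := mv_diff n T i e (fun _ => 1) Hpe). cbv beta in Hx. fold N in Hx.
      unfold N in Hx. rewrite mvN_SS in Hx. fold N in Hx. rewrite <- Hr1 in Hx.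
      destruct (Nat.ltb_spec e N); [|lia].
      assert (Hle : (phi <= r + 1)%nat) by lia.
      apply le_INR in Hle. rewrite plus_INR in Hle. change (INR 1) with 1 in Hle. fold N. lra. }
    destruct (GA ltac:(lia)) as [GA1 GA2]. destruct GB as [GB1 GB2].
    unfold Gc in GA1, GA2, GB1, GB2. fold N in GA1, GA2, GB1, GB2.
    assert (D1 := mv_diff n T i e (fun u => flow T u * (fst (z i) - fst (vpos n z zBS T u))) Hpe).
    assert (D2 := mv_diff n T i e (fun u => flow T u * (snd (z i) - snd (vpos n z zBS T u))) Hpe).
    cbv beta in D1, D2. fold N in D1, D2. destruct (Nat.ltb_spec e N); [|lia].
    assert (Hfe : 0 < flow T e) by (apply Hpf; lia).
    assert (E1 : fst (vpos n z zBS T e) = fst (z i)).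
    { assert (flow T e * (fst (z i) - fst (vpos n z zBS T e)) = 0) by lra.
      apply Rmult_integral in H0. destruct H0; lra. }
    assert (E2 : snd (vpos n z zBS T e) = snd (z i)).
    { assert (flow T e * (snd (z i) - snd (vpos n z zBS T e)) = 0) by lra.
      apply Rmult_integral in H0. destruct H0; lra. }
    assert (Ev : vpos n z zBS T e = z i) by (apply injective_projections; assumption).
    assert (Hei : e <> i) by (intros ->; apply Hpi; exact Hpe).
    unfold vpos in Ev. destruct (Nat.ltb_spec e n).
    + apply Hei, Hzinj; assumption.
    + fold N in Ev. destruct (Nat.ltb_spec e N); [|lia].
      apply (proj2 (Hav (e - n)%nat ltac:(lia)) i Hi). exact Ev.
  - intros Hd. rewrite Hdegi in Hd.
    destruct (GA ltac:(lia)) as [GA1 GA2].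
    unfold Gc in GA1, GA2. fold N in GA1, GA2.
    unfold N in GA1, GA2. rewrite mvN_SS in GA1, GA2. fold N in GA1, GA2.
    assert (HF := Hsrc i Hi). rewrite inflow_SS in HF. fold N in HF.
    assert (HFp : 0 < flow T i) by (apply Hpf; lia).
    set (I := SS N (fun u => if Nat.eqb (par T u) i then flow T u else 0)) in *.
    unfold centre. rewrite inflow_SS. fold N. fold I.
    rewrite (vpos_src n z zBS T i Hi).
    apply injective_projections; simpl.
    + rewrite fst_sumP. unfold in_nbrs. rewrite sum_filter. fold N.
      change (sumR (map ?g (seq 0 N))) with (SS N g).
      rewrite (SS_ext _ _ (fun u => fst (z i) * (if Nat.eqb (par T u) i then flow T u else 0)
         - (if Nat.eqb (par T u) i then flow T u * fst (vpos n z zBS T u) else 0))) in GA1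
         by (intros u Hu; destruct (par T u =? i); ring).
      rewrite SS_minus, SS_scal in GA1. fold I in GA1.
      set (X := SS N (fun u => if Nat.eqb (par T u) i then flow T u * fst (vpos n z zBS T u) else 0)) in *.
      assert (HX : X = fst (z i) * I + flow T i * (fst (z i) - fst (vpos n z zBS T (par T i)))) by lra.
      rewrite HX. replace (flow T i) with (1 + I) by lra. field. lra.
    + rewrite snd_sumP. unfold in_nbrs. rewrite sum_filter. fold N.
      change (sumR (map ?g (seq 0 N))) with (SS N g).
      rewrite (SS_ext _ _ (fun u => snd (z i) * (if Nat.eqb (par T u) i then flow T u else 0)
         - (if Nat.eqb (par T u) i then flow T u * snd (vpos n z zBS T u) else 0))) in GA2
         by (intros u Hu; destruct (par T u =? i); ring).
      rewrite SS_minus, SS_scal in GA2. fold I in GA2.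
      set (X := SS N (fun u => if Nat.eqb (par T u) i then flow T u * snd (vpos n z zBS T u) else 0)) in *.
      assert (HX : X = snd (z i) * I + flow T i * (snd (z i) - snd (vpos n z zBS T (par T i)))) by lra.
      rewrite HX. replace (flow T i) with (1 + I) by lra. field. lra.
Qed.
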